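(* (i) For any $W \in \mathbb{R}^{m \times n}$ with $m < 2n$, the map $x \mapsto \operatorname{ReLU}(Wx)$ from $\mathbb{R}^n$ to $\mathbb{R}^m$ is not injective. (ii) If $W \in \mathbb{R}^{2n \times n}$ has a directed spanning set of $\mathbb{R}^n$ with respect to every $x \in \mathbb{R}^n$, then, up to a rearrangement of its rows, $W = \begin{bmatrix} B \\ -DB \end{bmatrix}$, where $B \in \mathbb{R}^{n\times n}$ is invertible (its rows form a basis of $\mathbb{R}^n$) and $D \in \mathbb{R}^{n \times n}$ is a diagonal matrix with strictly positive diagonal entries.
   Context: $\operatorname{ReLU}(y)=\max(y,0)$ componentwise. A matrix $W$ with rows $w_i\in\mathbb{R}^n$ has a directed spanning set (DSS) of $\mathbb{R}^n$ with respect to $x \in \mathbb{R}^n$ if the rows $\{w_i : \langle x, w_i\rangle \geq 0\}$ span $\mathbb{R}^n$. *)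

(* Defs.v *)
From mathcomp Require Import all_boot all_order all_algebra.
From mathcomp Require Import perm.
Set Implicit Arguments. Unset Strict Implicit. Unset Printing Implicit Defensive.
Import Order.TTheory GRing.Theory Num.Theory.
Local Open Scope ring_scope.

(* Vectors of R^n are column vectors 'cV[R]_n; a matrix W : 'M[R]_(m,n)
   has rows w_i = row i W. *)

Definition relu (R : realFieldType) (m : nat) (y : 'cV[R]_m) : 'cV[R]_m :=
  map_mx (fun a => Num.max a 0) y.

Definition rowdot (R : realFieldType) (m n : nat) (W : 'M[R]_(m, n))
  (i : 'I_m) (x : 'cV[R]_n) : R := \sum_(j < n) W i j * x j 0.

Definition has_dss (R : realFieldType) (m n : nat) (W : 'M[R]_(m, n))
  (x : 'cV[R]_n) : Prop :=
  (1%:M <= \sum_(i < m | (0 <= rowdot W i x)%R) <<row i W>>)%MS.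

(* Main.v *)
Require Import Defs.
From mathcomp Require Import all_boot all_order all_algebra.
From mathcomp Require Import perm.
From mathcomp Require Import lra zify.
Set Implicit Arguments. Unset Strict Implicit. Unset Printing Implicit Defensive.
Import Order.TTheory GRing.Theory Num.Theory.
Local Open Scope ring_scope.

Lemma max0 (R : realFieldType) (a : R) : a <= 0 -> Num.max a 0 = 0.
Proof. by move=> h; case: (ler0P a) => // /lt_geF; rewrite h. Qed.

Lemma relu_eq (R : realFieldType) m (X V : 'cV[R]_m) (s : R) :
  (forall i, 0 < X i 0 -> V i 0 = 0) -> (forall i, X i 0 = 0 -> V i 0 = 0) ->
  (forall i, `|V i 0| / `|X i 0| <= s) -> 0 <= s ->
  relu (s *: X) = relu (s *: X + V).
Proof.
move=> H1 H2 H3 s0; apply/matrixP => i b; rewrite (ord1 b) !mxE.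
case: (ltgtP 0 (X i 0)) => h.
- by rewrite H1 // addr0.
- have hX : s * X i 0 <= 0 by apply: mulr_ge0_le0 => //; apply: ltW.
  have nX : 0 < `|X i 0| by rewrite normr_gt0; apply: ltr0_neq0.
  have := H3 i; rewrite ler_pdivrMr // (ltr0_norm h) => hv.
  have := ler_norm (V i 0) => hh.
  have h2 : s * X i 0 + V i 0 <= 0 by lra.
  by rewrite !max0.
- by rewrite H2 // addr0.
Qed.

Lemma rank_sum_rows (F : fieldType) m n (M : 'M[F]_(m,n)) (P : pred 'I_m) :
  (\rank (\sum_(i | P i) <<row i M>>) <= #|[pred i | P i && (row i M != 0%R)]|)%N.
Proof.
rewrite -sum1_card.
have -> : (\sum_(i in [pred i | P i && (row i M != 0%R)]) 1 =
           \sum_(i | P i) nat_of_bool (row i M != 0%R))%N.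
  rewrite big_mkcond [RHS]big_mkcond /=; apply: eq_bigr => i _.
  by rewrite inE; case: (P i); case: (row i M != 0).
apply: (big_ind2 (fun (A : 'M_n) k => \rank A <= k)%N).
- by rewrite mxrank0.
- move=> A1 k1 A2 k2 h1 h2; apply: leq_trans (leq_add h1 h2).
  exact: (mxrank_adds_leqif A1 A2).1.
- by move=> i _; rewrite genmxE rank_rV.
Qed.

Lemma span_card (F : fieldType) m n (M : 'M[F]_(m,n)) (P : pred 'I_m) :
  (1%:M <= \sum_(i | P i) <<row i M>>)%MS ->
  (n <= #|[pred i | P i && (row i M != 0%R)]|)%N.
Proof.
move=> h; apply: leq_trans (rank_sum_rows M P).
by rewrite -{1}(mxrank1 F n); apply: mxrankS.
Qed.

Lemma noninj_core (R : realFieldType) m n (W : 'M[R]_(m,n)) (x : 'cV_n) :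
  (forall i, row i W != 0 -> (W *m x) i 0 != 0) ->
  (#|[pred i | (0 < (W *m x) i 0)%R]| < n)%N ->
  ~ injective (fun y : 'cV[R]_n => relu (W *m y)).
Proof.
move=> gen card inj.
pose S := (\sum_(i | (0 < (W *m x) i 0)%R) <<row i W>>)%MS.
have rkS : (\rank S < n)%N.
  apply: leq_ltn_trans (rank_sum_rows W _) _; apply: leq_ltn_trans card.
  by apply: subset_leq_card; apply/subsetP => i; rewrite !inE => /andP[].
pose K := cokermx S.
have Knz : K != 0 by rewrite -mxrank_eq0 mxrank_coker subn_eq0 -ltnNge.
have [j vnz] : exists j, col j K != 0.
  case: (pickP (fun j => col j K != 0)) => [j h|h]; first by exists j.
  move: Knz => /negP; case; apply/eqP/matrixP => a b.
  by have := h b; move/negbFE/eqP/colP/(_ a); rewrite !mxE.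
pose v := col j K.
have Sv : S *m v = 0 by rewrite /v colE mulmxA mulmx_coker mul0mx.
have Wv0 : forall i, 0 < (W *m x) i 0 -> (W *m v) i 0 = 0.
  move=> i pi; have : (row i W <= S)%MS by apply: (sumsmx_sup i) => //; rewrite genmxE.
  case/submxP => D hD.
  have : row i (W *m v) = 0 by rewrite row_mul hD -mulmxA Sv mulmx0.
  by move/rowP/(_ 0); rewrite !mxE.
have Wz : forall i, (W *m x) i 0 = 0 -> (W *m v) i 0 = 0.
  move=> i h; case: (eqVneq (row i W) 0) => [rz|nz]; last first.
    by move: (gen i nz); rewrite h eqxx.
  have := row_mul i W v; rewrite rz mul0mx => /rowP/(_ 0).
  by rewrite !mxE.
pose s := \sum_i `|(W *m v) i 0| / `|(W *m x) i 0|.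
have s0 : 0 <= s by apply: sumr_ge0 => i _; apply: divr_ge0.
have sge : forall i, `|(W *m v) i 0| / `|(W *m x) i 0| <= s.
  move=> i; rewrite /s (bigD1 i) //= lerDl; apply: sumr_ge0 => k _; exact: divr_ge0.
have := relu_eq Wv0 Wz sge s0; rewrite scalemxAr -mulmxDr => /inj /eqP.
rewrite -subr_eq0 opprD addrA subrr add0r oppr_eq0 (negbTE vnz). done.
Qed.

Lemma generic (R : realFieldType) m n (W : 'M[R]_(m,n)) :
  exists x : 'cV[R]_n, forall i, row i W != 0 -> (W *m x) i 0 != 0.
Proof.
pose p i : {poly R} := \sum_(j < n) W i j *: 'X^j.
have pE : forall i t, (W *m (\col_j (t ^+ j))) i 0 = (p i).[t].
  move=> i t; rewrite horner_sum mxE; apply: eq_bigr => j _.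
  by rewrite mxE hornerZ hornerXn.
have pnz : forall i, row i W != 0 -> p i != 0.
  move=> i; apply: contra => /eqP h; apply/eqP/rowP => j; rewrite !mxE.
  have := congr1 (fun q : {poly R} => q`_j) h.
  rewrite coef_sum coef0 (bigD1 j) //= big1 ?addr0 => [|k kj].
    by rewrite coefZ coefXn eqxx mulr1.
  by rewrite coefZ coefXn (inj_eq val_inj) eq_sym (negbTE kj) mulr0.
pose q := \prod_(i | row i W != 0) p i.
have qnz : q != 0 by apply/prodf_neq0.
have [t qt] : exists t, q.[t] != 0.
  pose s := [seq (k%:R : R) | k <- iota 0 (size q)].
  case: (boolP (all (root q) s)) => [allr|].
    have us : uniq s.
      rewrite map_inj_uniq ?iota_uniq //.
      by move=> a b /eqP; rewrite eqr_nat => /eqP.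
    have := max_poly_roots qnz allr us.
    by rewrite size_map size_iota ltnn.
  by case/allPn => t _ nr; exists t; rewrite -rootE.
exists (\col_j (t ^+ j)) => i nz; rewrite pE.
move: qt; rewrite horner_prod; apply: contra => h.
by rewrite (bigD1 i nz) /= (eqP h) mul0r.
Qed.

Lemma part1 (R : realFieldType) (m n : nat) (W : 'M[R]_(m, n)) : (m < 2 * n)%N ->
     ~ injective (fun x : 'cV[R]_n => relu (W *m x)).
Proof.
move=> hm; have [x gen] := generic W.
have oppE : forall (A : 'cV[R]_m) i, (- A) i 0 = - A i 0 by move=> A i; rewrite mxE.
have gen' : forall i, row i W != 0 -> (W *m (-x)) i 0 != 0.
  by move=> i /gen; rewrite mulmxN oppE oppr_eq0.
have hs : (#|[pred i | (0 < (W *m x) i 0)%R]| +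
           #|[pred i | (0 < (W *m (-x)) i 0)%R]| <= m)%N.
  rewrite -cardUI.
  have -> : #|[predI [pred i | (0 < (W *m x) i 0)%R] & [pred i | (0 < (W *m (-x)) i 0)%R]]| = 0%N.
    apply: eq_card0 => i; rewrite !inE mulmxN oppE oppr_gt0.
    apply/negbTE; rewrite negb_and -leNgt.
    by rewrite -leNgt; case: (lerP ((W *m x) i 0) 0) => // /ltW ->; rewrite orbT.
  by rewrite addn0 -[X in (_ <= X)%N](card_ord m) max_card.
case: (ltnP #|[pred i | (0 < (W *m x) i 0)%R]| n) => h.
  exact: noninj_core gen h.
apply: noninj_core gen' _; lia.
Qed.

Definition Hd (R : realFieldType) n (B C : 'M[R]_n) (x : 'cV[R]_n) :=
  ((1%:M : 'M_n) <= (\sum_(k | (0 <= (B *m x) k 0)%R) <<row k B>>) +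
           (\sum_(k | (0 <= (C *m x) k 0)%R) <<row k C>>))%MS.

Lemma dss_perm (R : realFieldType) m n (W : 'M[R]_(m, n)) (s : 'S_m) x :
  has_dss W x -> has_dss (row_perm s W) x.
Proof.
rewrite /has_dss (reindex_inj (@perm_inj _ s)).
have E1 : forall i, rowdot (row_perm s W) i x = rowdot W (s i) x.
  by move=> i; apply: eq_bigr => j _; rewrite mxE.
have E2 : forall i, row i (row_perm s W) = row (s i) W.
  by move=> i; apply/rowP => j; rewrite !mxE.
by rewrite (eq_bigl _ _ (fun i => congr1 (fun a => 0 <= a) (E1 i)))
           (eq_bigr _ (fun i _ => congr1 (fun M => <<M>>%MS) (E2 i))).
Qed.

Lemma dss_split (R : realFieldType) n (B C : 'M[R]_n) x :
  has_dss (col_mx B C) x -> Hd B C x.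
Proof.
rewrite /has_dss /Hd big_split_ord /=.
have E1 : forall k, rowdot (col_mx B C) (lshift n k) x = (B *m x) k 0.
  by move=> k; rewrite /rowdot mxE; apply: eq_bigr => j _; rewrite col_mxEu.
have E2 : forall k, rowdot (col_mx B C) (rshift n k) x = (C *m x) k 0.
  by move=> k; rewrite /rowdot mxE; apply: eq_bigr => j _; rewrite col_mxEd.
rewrite (eq_bigl _ _ (fun k => congr1 (fun a => 0 <= a) (E1 k))).
rewrite (eq_bigl _ _ (fun k => congr1 (fun a => 0 <= a) (E2 k))).
by rewrite (eq_bigr _ (fun k _ => congr1 (fun M => <<M>>%MS) (rowKu k B C)))
           (eq_bigr _ (fun k _ => congr1 (fun M => <<M>>%MS) (rowKd k B C))).
Qed.

Lemma unitC (R : realFieldType) n (B C : 'M[R]_n) :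
  (forall x, Hd B C x) -> (exists x : 'cV[R]_n, forall k, (B *m x) k 0 < 0) -> C \in unitmx.
Proof.
move=> H [x hx]; have := H x; rewrite /Hd big_pred0 => [|k]; last by rewrite leNgt hx.
rewrite adds0mx_id => h; rewrite -row_full_unit -sub1mx; apply: submx_trans h _.
by apply/sumsmx_subP => k _; rewrite genmxE row_sub.
Qed.

Lemma negA (R : realFieldType) n (B C : 'M[R]_n) :
  (forall x, Hd B C x) -> B \in unitmx -> forall c k, (C *m invmx B) c k <= 0.
Proof.
move=> H Bu.
have step1 : forall y : 'cV[R]_n, (forall k, y k 0 < 0) ->
    forall c, 0 <= (C *m invmx B *m y) c 0.
  move=> y hy c; have := H (invmx B *m y).
  rewrite /Hd mulmxA mulmxV // mul1mx big_pred0 => [|k]; last by rewrite leNgt hy.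
  rewrite adds0mx_id => /span_card hc; rewrite -mulmxA.
  case: (lerP 0 ((C *m (invmx B *m y)) c 0)) => // neg; exfalso.
  have : (#|[pred k | (0 <= (C *m (invmx B *m y)) k 0)%R && (row k C != 0%R)]|
          <= #|predC1 c|)%N.
    apply: subset_leq_card; apply/subsetP => k; rewrite !inE.
    by apply: contraTneq => ->; rewrite leNgt neg.
  rewrite cardC1 card_ord => h2; have := leq_trans hc h2.
  have n0 : (0 < n)%N := leq_ltn_trans (leq0n c) (ltn_ord c).
  lia.
move: (C *m invmx B) step1 => A step1 c k.
case: (lerP (A c k) 0) => // apos; exfalso.
pose sm := \sum_j A c j.
pose d := A c k / (`|sm| + 1).
have d0 : 0 < d by apply: divr_gt0 => //; apply: ltr_pwDr.
have hd : d * (`|sm| + 1) = A c k by rewrite /d divfK // gt_eqF // ltr_pwDr.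
pose y : 'cV[R]_n := - delta_mx k 0 - d *: const_mx 1.
have hy : forall j, y j 0 < 0.
  move=> j; rewrite !mxE; have := ler0n R ((j == k) && (0 == 0 :> 'I_1)); lra.
have := step1 y hy c.
rewrite /y mulmxBr mulmxN -colE -scalemxAr !mxE.
under eq_bigr do rewrite mxE mulr1.
rewrite -/sm => h.
have hs : - sm <= `|sm| by rewrite -normrN ler_norm.
nra.
Qed.

Lemma monomial (R : realFieldType) n (N M : 'M[R]_n) :
  N *m M = 1%:M -> M *m N = 1%:M -> (forall i j, 0 <= N i j) ->
  (forall i j, 0 <= M i j) ->
  forall i, exists k, 0 < N i k /\ forall j, j != k -> N i j = 0.
Proof.
move=> NM MN hN hM i.
have e : \sum_l N i l * M l i = 1.
  by have := congr1 (fun A : 'M[R]_n => A i i) NM; rewrite /= !mxE eqxx.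
have [k hk] : exists k, 0 < N i k * M k i.
  case: (pickP (fun k => 0 < N i k * M k i)) => [k h|h]; first by exists k.
  exfalso; have : \sum_l N i l * M l i = 0.
    apply: big1 => l _; have := h l; move/negbT; rewrite -leNgt => h'.
    by apply/eqP; rewrite eq_le h' mulr_ge0.
  by rewrite e => /eqP; rewrite oner_eq0.
have Nik : 0 < N i k.
  by rewrite lt_def (hN i k) andbT; apply: contraTneq hk => ->; rewrite mul0r ltxx.
have Mki : 0 < M k i.
  by rewrite lt_def (hM k i) andbT; apply: contraTneq hk => ->; rewrite mulr0 ltxx.
exists k; split => // j jk.
have : (M *m N) k j = 0 by rewrite MN !mxE eq_sym (negbTE jk).
rewrite mxE => s0.
have := @psumr_eq0P _ _ _ _ (fun l _ => mulr_ge0 (hM k l) (hN l j)) s0 i isT.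
by move/eqP; rewrite mulf_eq0 (gt_eqF Mki) /= => /eqP.
Qed.

Lemma block_perm n (f g : 'I_n -> 'I_(n + n)) :
  injective f -> injective g -> (forall a b, f a != g b) ->
  exists s : 'S_(n + n), forall k, s (lshift n k) = f k /\ s (rshift n k) = g k.
Proof.
move=> fi gi fg.
pose h' (u : 'I_n + 'I_n) := match u with inl a => f a | inr b => g b end.
have hi' : injective h'.
  case=> [a|a] [b|b] /= e.
  - by rewrite (fi _ _ e).
  - by move: (fg a b); rewrite e eqxx.
  - by move: (fg b a); rewrite e eqxx.
  - by rewrite (gi _ _ e).
have hi : injective (h' \o split) := inj_comp hi' (can_inj splitK).
exists (perm hi) => k; rewrite !permE /=.
by have := unsplitK (inl k : 'I_n + 'I_n); have := unsplitK (inr k : 'I_n + 'I_n); move=> /= -> ->.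
Qed.

Lemma row_perm_block (R : Type) n p (W : 'M[R]_(n + n, p)) (s : 'S_(n + n)) f g :
  (forall k, s (lshift n k) = f k /\ s (rshift n k) = g k) ->
  row_perm s W = col_mx (\matrix_(k, j) W (f k) j) (\matrix_(k, j) W (g k) j).
Proof.
move=> hs; apply/matrixP => i j; rewrite -[i]splitK.
case: (split i) => a /=; rewrite mxE.
  by rewrite col_mxEu mxE (hs a).1.
by rewrite col_mxEd mxE (hs a).2.
Qed.

Lemma assemble (R : realFieldType) n (B C N M : 'M[R]_n) :
  C = - (N *m B) -> N *m M = 1%:M ->
  (forall i, exists k, 0 < N i k /\ forall j, j != k -> N i j = 0) ->
  exists (tp : 'S_n) (d : 'rV[R]_n),
    (forall i, 0 < d 0 i) /\ C = - (diag_mx d *m row_perm tp B).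
Proof.
move=> CE NM mono.
have [t ht] := fin_all_exists mono.
have sumE : forall (A : 'M[R]_n) i j, (N *m A) i j = N i (t i) * A (t i) j.
  move=> A i j; rewrite mxE (bigD1 (t i)) //= big1 ?addr0 // => l hl.
  by rewrite ((ht i).2 l hl) mul0r.
have tinj : injective t.
  move=> i i' e; apply/eqP; apply: contraT => ne.
  have h1 := sumE M i i; rewrite NM mxE eqxx in h1.
  have h2 := sumE M i' i; rewrite NM mxE eq_sym (negbTE ne) -e in h2.
  have p : 0 < N i' (t i) by rewrite e; exact: (ht i').1.
  move/eqP: h2; rewrite eq_sym mulf_eq0 (gt_eqF p) /=.
  by move=> /eqP h3; move: h1; rewrite h3 mulr0 => /eqP; rewrite oner_eq0.
exists (perm tinj), (\row_i N i (t i)); split.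
  by move=> i; rewrite mxE; exact: (ht i).1.
rewrite CE; congr (- _); apply/matrixP => i j.
by rewrite sumE mul_diag_mx !mxE permE.
Qed.

Lemma part2 (R : realFieldType) (n : nat) (W : 'M[R]_(n + n, n)) :
     (forall x : 'cV[R]_n, has_dss W x) ->
     exists (s : 'S_(n + n)) (B : 'M[R]_n) (d : 'rV[R]_n),
       B \in unitmx /\ (forall i, 0 < d 0 i) /\
       row_perm s W = col_mx B (- (diag_mx d *m B)).
Proof.
move=> H; have [x0 gen] := generic W.
have rdE : forall i x, rowdot W i x = (W *m x) i 0 by move=> i x; rewrite /rowdot mxE.
have oppE : forall (A : 'cV[R]_(n + n)) i, (- A) i 0 = - A i 0 by move=> A i; rewrite mxE.
pose P := [pred i | (0 < (W *m x0) i 0)%R].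
pose Q := [pred i | ((W *m x0) i 0 < 0)%R].
have hP : (n <= #|P|)%N.
  apply: leq_trans (span_card (H x0)) _; apply: subset_leq_card.
  apply/subsetP => i; rewrite !inE rdE => /andP[h1 h2].
  by rewrite lt_def h1 andbT; apply: gen.
have hQ : (n <= #|Q|)%N.
  apply: leq_trans (span_card (H (- x0))) _; apply: subset_leq_card.
  apply/subsetP => i; rewrite !inE rdE mulmxN oppE oppr_ge0 => /andP[h1 h2].
  by rewrite lt_neqAle h1 andbT; apply: gen.
pose f k := enum_val (widen_ord hP k).
pose g k := enum_val (widen_ord hQ k).
have wi : forall m (h : (n <= m)%N), injective (widen_ord h).
  by move=> m h a b /(congr1 val) /= /val_inj.
have fi : injective f by move=> a b /enum_val_inj /wi.
have gi : injective g by move=> a b /enum_val_inj /wi.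
have fP : forall k, (0 < (W *m x0) (f k) 0)%R.
  by move=> k; have := enum_valP (widen_ord hP k).
have gQ : forall k, ((W *m x0) (g k) 0 < 0)%R.
  by move=> k; have := enum_valP (widen_ord hQ k).
have fg : forall a b, f a != g b.
  move=> a b; apply/eqP => e; have := fP a; rewrite e => h.
  by have := gQ b; rewrite ltNge (ltW h).
have [s1 hs1] := block_perm fi gi fg.
have W1 := row_perm_block W hs1.
set B := \matrix_(k, j) W (f k) j in W1.
set C := \matrix_(k, j) W (g k) j in W1.
have HBC : forall x, Hd B C x.
  by move=> x; apply: dss_split; rewrite -W1; apply: dss_perm.
have HCB : forall x, Hd C B x by move=> x; rewrite /Hd addsmxC; exact: HBC.
have Bx : forall (x : 'cV[R]_n) k, (B *m x) k 0 = (W *m x) (f k) 0.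
  by move=> x k; rewrite !mxE; apply: eq_bigr => j _; rewrite ?mxE.
have Cx : forall (x : 'cV[R]_n) k, (C *m x) k 0 = (W *m x) (g k) 0.
  by move=> x k; rewrite !mxE; apply: eq_bigr => j _; rewrite ?mxE.
have Bu : B \in unitmx by apply: (unitC HCB); exists x0 => k; rewrite Cx.
have Cu : C \in unitmx.
  apply: (unitC HBC); exists (- x0) => k; rewrite Bx mulmxN oppE oppr_lt0; exact: fP.
have hA := negA HBC Bu.
have hA' := negA HCB Cu.
have mopp : forall (A : 'M[R]_n) i j, (- A) i j = - A i j by move=> A i j; rewrite mxE.
have NM : (- (C *m invmx B)) *m (- (B *m invmx C)) = 1%:M.
  by rewrite mulNmx mulmxN opprK mulmxA mulmxKV // mulmxV.
have MN : (- (B *m invmx C)) *m (- (C *m invmx B)) = 1%:M.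
  by rewrite mulNmx mulmxN opprK mulmxA mulmxKV // mulmxV.
have hN : forall i j, 0 <= (- (C *m invmx B)) i j by move=> i j; rewrite mopp oppr_ge0.
have hM : forall i j, 0 <= (- (B *m invmx C)) i j by move=> i j; rewrite mopp oppr_ge0.
have mono := monomial NM MN hN hM.
have CE : C = - ((- (C *m invmx B)) *m B) by rewrite mulNmx opprK mulmxKV.
have [tp [d [dpos CE']]] := assemble CE NM mono.
pose f2 k := lshift n (tp k).
pose g2 (k : 'I_n) : 'I_(n + n) := rshift n k.
have f2i : injective f2 by move=> a b /lshift_inj /perm_inj.
have g2i : injective g2 by move=> a b /rshift_inj.
have fg2 : forall a b, f2 a != g2 b.
  by move=> a b; rewrite /f2 /g2; apply/eqP => /(congr1 val) /=; move: (ltn_ord (tp a)); lia.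
have [s2 hs2] := block_perm f2i g2i fg2.
exists (s2 * s1)%g, (row_perm tp B), d; split.
  by rewrite row_permE unitmx_mul unitmx_perm.
split => //.
rewrite row_permM W1 (row_perm_block _ hs2) -CE'; congr col_mx; apply/matrixP => i j.
  by rewrite [LHS]mxE /f2 col_mxEu [RHS]mxE.
by rewrite [LHS]mxE /g2 col_mxEd.
Qed.

Theorem corollary1 (R : realFieldType) :
  (forall (m n : nat) (W : 'M[R]_(m, n)), (m < 2 * n)%N ->
     ~ injective (fun x : 'cV[R]_n => relu (W *m x)))
  /\
  (forall (n : nat) (W : 'M[R]_(n + n, n)),
     (forall x : 'cV[R]_n, has_dss W x) ->
     exists (s : 'S_(n + n)) (B : 'M[R]_n) (d : 'rV[R]_n),
       B \in unitmx /\ (forall i, 0 < d 0 i) /\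
       row_perm s W = col_mx B (- (diag_mx d *m B))).
Proof.
split; [exact: part1 | exact: part2].
Qed.
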